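(* Every ternary cubic form $F\in\mathbb{C}[x_0,x_1,x_2]_3$ has an apolar star configuration $\mathbb{X}(4)$.
   Context: Let $S=\mathbb{C}[x_0,x_1,x_2]$ and $T=\mathbb{C}[y_0,y_1,y_2]$, where $T$ acts on $S$ by differentiation, $y_j=\partial/\partial x_j$. For a form $F\in S$, $F^\perp=\{\partial\in T:\partial F=0\}$. A finite set of points $\mathbb{X}\subset\mathbb{P}^2=\mathbb{P}(S_1)$ with defining ideal $I(\mathbb{X})\subseteq T$ is apolar to $F$ if $I(\mathbb{X})\subseteq F^\perp$. A star configuration $\mathbb{X}(4)\subset\mathbb{P}^2$: take $4$ linear forms $l_1,\dots,l_4\in T_1$ such that any $3$ of them are linearly independent; $\mathbb{X}(4)$ is the set of $6$ pairwise intersection points of the lines $\{l_i=0\}$, with ideal $\bigcap_{1\le i<j\le 4}(l_i,l_j)$. *)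

(* Defs.v *)
From HB Require Import structures.
From mathcomp Require Import all_boot all_algebra.
From mathcomp Require Import reals complex.
From mathcomp Require Import mpoly.
Set Implicit Arguments. Unset Strict Implicit. Unset Printing Implicit Defensive.
Import GRing.Theory.
Local Open Scope ring_scope.

(* Both S = C[x0,x1,x2] and T = C[y0,y1,y2] are modelled as {mpoly C[3]}. *)

Definition diff_act (K : ringType) (g F : {mpoly K[3]}) : {mpoly K[3]} :=
  \sum_(m <- msupp g) g@_m *: mderivm m F.

Definition perp (K : ringType) (F : {mpoly K[3]}) : pred {mpoly K[3]} :=
  [pred g | diff_act g F == 0].

Definition any3_lin_indep (K : ringType) (l : 'I_4 -> {mpoly K[3]}) : Prop :=
  forall i j k : 'I_4, i != j -> i != k -> j != k ->
    forall a b c : K, a *: l i + b *: l j + c *: l k = 0 ->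
      [/\ a = 0, b = 0 & c = 0].

(* Membership in the ideal of the star configuration:
   \bigcap_{1 <= i < j <= 4} (l_i, l_j). *)
Definition in_star_ideal (K : ringType) (l : 'I_4 -> {mpoly K[3]})
    (g : {mpoly K[3]}) : Prop :=
  forall i j : 'I_4, (i < j)%N ->
    exists a b : {mpoly K[3]}, g = a * l i + b * l j.

Definition star_apolar (K : ringType) (l : 'I_4 -> {mpoly K[3]})
    (F : {mpoly K[3]}) : Prop :=
  forall g, in_star_ideal l g -> g \in perp F.

(* Main.v *)
Require Import Defs.
From HB Require Import structures.
From mathcomp Require Import all_boot all_algebra.
From mathcomp Require Import reals complex.
From mathcomp Require Import mpoly.
From mathcomp.multinomials Require Import ssrcomplements.
From mathcomp Require Import ring zify.
From Stdlib Require Import Classical_Prop.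
Set Implicit Arguments. Unset Strict Implicit. Unset Printing Implicit Defensive.
Import GRing.Theory Num.Theory.
Local Open Scope ring_scope.

(* Proof outline:
   - A cubic F is encoded by its symmetric trilinear form Phi (10 coefficients).
   - [good a]: there is a basis v1 v2 v3 with Phi(v1,v2,v3) = 0 and
     Phi(vi,vi,vj) + Phi(vi,vj,vj) = 0 for i < j; then the lines
     l = v1.y, v2.y, v3.y, (v1+v2+v3).y form a star configuration apolar to F.
   - [good_all]: every cubic is good (case analysis: singular point / Hessian).
   - F is then a combination of cubes of the 6 intersection points, each of
     which is killed by the ideal (l_i, l_j). *)


Section Gen.
Variable K : comNzRingType.

Record vec := Vec { x0 : K; x1 : K; x2 : K }.
Record cub := Cub { c000 : K; c001 : K; c002 : K; c011 : K; c012 : K;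
  c022 : K; c111 : K; c112 : K; c122 : K; c222 : K }.

Definition Phi (a : cub) (u v w : vec) : K :=
  c000 a * x0 u * x0 v * x0 w +
  c001 a * x0 u * x0 v * x1 w +
  c002 a * x0 u * x0 v * x2 w +
  c001 a * x0 u * x1 v * x0 w +
  c011 a * x0 u * x1 v * x1 w +
  c012 a * x0 u * x1 v * x2 w +
  c002 a * x0 u * x2 v * x0 w +
  c012 a * x0 u * x2 v * x1 w +
  c022 a * x0 u * x2 v * x2 w +
  c001 a * x1 u * x0 v * x0 w +
  c011 a * x1 u * x0 v * x1 w +
  c012 a * x1 u * x0 v * x2 w +
  c011 a * x1 u * x1 v * x0 w +
  c111 a * x1 u * x1 v * x1 w +
  c112 a * x1 u * x1 v * x2 w +
  c012 a * x1 u * x2 v * x0 w +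
  c112 a * x1 u * x2 v * x1 w +
  c122 a * x1 u * x2 v * x2 w +
  c002 a * x2 u * x0 v * x0 w +
  c012 a * x2 u * x0 v * x1 w +
  c022 a * x2 u * x0 v * x2 w +
  c012 a * x2 u * x1 v * x0 w +
  c112 a * x2 u * x1 v * x1 w +
  c122 a * x2 u * x1 v * x2 w +
  c022 a * x2 u * x2 v * x0 w +
  c122 a * x2 u * x2 v * x1 w +
  c222 a * x2 u * x2 v * x2 w.

Definition det3 (u v w : vec) : K :=
  x0 u * (x1 v * x2 w - x2 v * x1 w) - x1 u * (x0 v * x2 w - x2 v * x0 w)
  + x2 u * (x0 v * x1 w - x1 v * x0 w).

Definition dot (u v : vec) := x0 u * x0 v + x1 u * x1 v + x2 u * x2 v.
Definition cross (u v : vec) :=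
  Vec (x1 u * x2 v - x2 u * x1 v) (x2 u * x0 v - x0 u * x2 v) (x0 u * x1 v - x1 u * x0 v).

End Gen.

Section Trilin.
Variable K : numClosedFieldType.
Local Notation vec := (vec K).
Local Notation cub := (cub K).
Implicit Types (u v w p q r ej : vec) (a : cub).

Definition good (a : cub) : Prop :=
  exists u v w, [/\ det3 u v w != 0, Phi a u v w = 0, Phi a u u v + Phi a u v v = 0,
    Phi a u u w + Phi a u w w = 0 & Phi a v v w + Phi a v w w = 0].

Definition vlin (x y : K) (u v w : vec) : vec :=
  Vec (x * x0 u + y * x0 v + x0 w) (x * x1 u + y * x1 v + x1 w) (x * x2 u + y * x2 v + x2 w).

Lemma quad_root (A B C : K) : A != 0 \/ B != 0 \/ C = 0 ->
  exists x, A * x ^+ 2 + B * x + C = 0.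
Proof.
have [->|nzA _] := eqVneq A 0; last first.
  have [x hx] := @solve_monicpoly K 2 (fun i => if i == 0%N then - C / A else - B / A) isT.
  exists x; move: hx; rewrite !big_ord_recr big_ord0 /= add0r expr0 expr1 mulr1 => ->.
  by field.
case=> [/eqP//|[nzB|->]]; last by exists 0; rewrite expr0n /= !mulr0 !addr0.
by exists (- C / B); rewrite mul0r add0r; field.
Qed.

Lemma solv (f g h : K) : f != 0 \/ g != 0 \/ h = 0 ->
  f != 0 \/ f + 2 * g != 0 \/ g + h = 0.
Proof.
have [->|] := eqVneq f 0; last by left.
have [->|ng] := eqVneq g 0; last by right; left; rewrite add0r mulf_neq0 // pnatr_eq0.
by case=> [/eqP//|[/eqP//|->]]; right; right; rewrite addr0.
Qed.

Lemma caseK a v1 v2 w :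
  Phi a v1 v2 v1 = 0 -> Phi a v1 v2 v2 = 0 -> Phi a v1 v2 w = 0 -> det3 v1 v2 w != 0 ->
  (Phi a v1 v1 v1 != 0 \/ Phi a v1 v1 w != 0 \/ Phi a v1 w w = 0) ->
  (Phi a v2 v2 v2 != 0 \/ Phi a v2 v2 w != 0 \/ Phi a v2 w w = 0) ->
  good a.
Proof.
move=> H1 H2 H3 hD s1 s2.
have [x hx] : exists x, Phi a v1 v1 v1 * x ^+ 2 + (Phi a v1 v1 v1 + 2 * Phi a v1 v1 w) * x
   + (Phi a v1 v1 w + Phi a v1 w w) = 0.
  exact/quad_root/solv.
have [y hy] : exists y, Phi a v2 v2 v2 * y ^+ 2 + (Phi a v2 v2 v2 + 2 * Phi a v2 v2 w) * y
   + (Phi a v2 v2 w + Phi a v2 w w) = 0.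
  exact/quad_root/solv.
exists v1, v2, (vlin x y v1 v2 w); split.
- suff -> : det3 v1 v2 (vlin x y v1 v2 w) = det3 v1 v2 w by [].
  rewrite /det3 /vlin /=; ring.
- have e : Phi a v1 v2 (vlin x y v1 v2 w) =
      x * Phi a v1 v2 v1 + y * Phi a v1 v2 v2 + Phi a v1 v2 w.
    rewrite /Phi /vlin /=; ring.
  by rewrite e H1 H2 H3; ring.
- have -> : Phi a v1 v1 v2 + Phi a v1 v2 v2 = Phi a v1 v2 v1 + Phi a v1 v2 v2.
    rewrite /Phi; ring.
  by rewrite H1 H2 addr0.
- have e : Phi a v1 v1 (vlin x y v1 v2 w) + Phi a v1 (vlin x y v1 v2 w) (vlin x y v1 v2 w) =
     (Phi a v1 v1 v1 * x ^+ 2 + (Phi a v1 v1 v1 + 2 * Phi a v1 v1 w) * x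
      + (Phi a v1 v1 w + Phi a v1 w w)) + (y + 2 * x * y) * Phi a v1 v2 v1
      + y ^+ 2 * Phi a v1 v2 v2 + 2 * y * Phi a v1 v2 w.
    rewrite /Phi /vlin /=; ring.
  by rewrite e hx H1 H2 H3; ring.
- have e : Phi a v2 v2 (vlin x y v1 v2 w) + Phi a v2 (vlin x y v1 v2 w) (vlin x y v1 v2 w) =
     (Phi a v2 v2 v2 * y ^+ 2 + (Phi a v2 v2 v2 + 2 * Phi a v2 v2 w) * y
      + (Phi a v2 v2 w + Phi a v2 w w)) + (x + 2 * x * y) * Phi a v1 v2 v2
      + x ^+ 2 * Phi a v1 v2 v1 + 2 * x * Phi a v1 v2 w.
    rewrite /Phi /vlin /=; ring.
  by rewrite e hy H1 H2 H3; ring.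
Qed.


Definition e0 : vec := Vec 1 0 0.
Definition e1 : vec := Vec 0 1 0.
Definition e2 : vec := Vec 0 0 1.
Definition nzv (p : vec) : Prop := x0 p != 0 \/ x1 p != 0 \/ x2 p != 0.
Definition vsc (l : K) (p : vec) := Vec (l * x0 p) (l * x1 p) (l * x2 p).

Lemma Phi_sym12 a u v w : Phi a u v w = Phi a v u w.
Proof. rewrite /Phi; ring. Qed.
Lemma Phi_sym23 a u v w : Phi a u v w = Phi a u w v.
Proof. rewrite /Phi; ring. Qed.
Lemma Phi_sym13 a u v w : Phi a u v w = Phi a w v u.
Proof. rewrite /Phi; ring. Qed.

Lemma Phi_lin3 a u v w : Phi a u v w =
  x0 w * Phi a u v e0 + x1 w * Phi a u v e1 + x2 w * Phi a u v e2.
Proof. rewrite /Phi /=; ring. Qed.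

Lemma eq_via (x y d c e : K) : d != 0 -> (x - y) * d = c * e -> e = 0 -> x = y.
Proof.
move=> nd h e0'; move: h; rewrite e0' mulr0 => /eqP; rewrite mulf_eq0 (negbTE nd) orbF.
by rewrite subr_eq0 => /eqP.
Qed.

Lemma cramer (l0 l1 l2 : K) p q r :
  det3 p q r != 0 ->
  l0 * x0 p + l1 * x1 p + l2 * x2 p = 0 ->
  l0 * x0 q + l1 * x1 q + l2 * x2 q = 0 ->
  l0 * x0 r + l1 * x1 r + l2 * x2 r = 0 ->
  [/\ l0 = 0, l1 = 0 & l2 = 0].
Proof.
move=> hD hp hq hr.
have H0 : l0 * det3 p q r = (x1 q * x2 r - x2 q * x1 r) * (l0 * x0 p + l1 * x1 p + l2 * x2 p)
   - (x1 p * x2 r - x2 p * x1 r) * (l0 * x0 q + l1 * x1 q + l2 * x2 q)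
   + (x1 p * x2 q - x2 p * x1 q) * (l0 * x0 r + l1 * x1 r + l2 * x2 r) by rewrite /det3; ring.
have H1 : l1 * det3 p q r = - (x0 q * x2 r - x2 q * x0 r) * (l0 * x0 p + l1 * x1 p + l2 * x2 p)
   + (x0 p * x2 r - x2 p * x0 r) * (l0 * x0 q + l1 * x1 q + l2 * x2 q)
   - (x0 p * x2 q - x2 p * x0 q) * (l0 * x0 r + l1 * x1 r + l2 * x2 r) by rewrite /det3; ring.
have H2 : l2 * det3 p q r = (x0 q * x1 r - x1 q * x0 r) * (l0 * x0 p + l1 * x1 p + l2 * x2 p)
   - (x0 p * x1 r - x1 p * x0 r) * (l0 * x0 q + l1 * x1 q + l2 * x2 q)
   + (x0 p * x1 q - x1 p * x0 q) * (l0 * x0 r + l1 * x1 r + l2 * x2 r) by rewrite /det3; ring.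
rewrite hp hq hr !mulr0 !subr0 !addr0 in H0 H1 H2.
split.
- by apply/eqP; move/eqP: H0; rewrite mulf_eq0 (negbTE hD) orbF.
- by apply/eqP; move/eqP: H1; rewrite mulf_eq0 (negbTE hD) orbF.
- by apply/eqP; move/eqP: H2; rewrite mulf_eq0 (negbTE hD) orbF.
Qed.

Lemma span_Phi a u v p q r : det3 p q r != 0 ->
  Phi a u v p = 0 -> Phi a u v q = 0 -> Phi a u v r = 0 -> forall x, Phi a u v x = 0.
Proof.
move=> hD hp hq hr x.
have : [/\ Phi a u v e0 = 0, Phi a u v e1 = 0 & Phi a u v e2 = 0].
  apply: (cramer hD).
  - by rewrite -hp (Phi_lin3 a u v p); ring.
  - by rewrite -hq (Phi_lin3 a u v q); ring.
  - by rewrite -hr (Phi_lin3 a u v r); ring.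
case=> h0 h1 h2.
by rewrite Phi_lin3 h0 h1 h2; ring.
Qed.

Lemma par u p : det3 u p e0 = 0 -> det3 u p e1 = 0 -> det3 u p e2 = 0 -> nzv p ->
  exists l, u = vsc l p.
Proof.
rewrite /det3 /= => h0 h1 h2.
case=> [n0|[n1|n2]].
- exists (x0 u / x0 p); case: u h0 h1 h2 => u0 u1 u2 /= h0 h1 h2; congr Vec.
  + by field.
  + apply: (@eq_via _ _ (x0 p) (-1) (u0 * (x1 p * 1 - x2 p * 0) - u1 * (x0 p * 1 - x2 p * 0) +
       u2 * (x0 p * 0 - x1 p * 0))) => //; by field.
  + apply: (@eq_via _ _ (x0 p) 1 (u0 * (x1 p * 0 - x2 p * 1) - u1 * (x0 p * 0 - x2 p * 0) +
       u2 * (x0 p * 1 - x1 p * 0))) => //; by field.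
- exists (x1 u / x1 p); case: u h0 h1 h2 => u0 u1 u2 /= h0 h1 h2; congr Vec.
  + apply: (@eq_via _ _ (x1 p) 1 (u0 * (x1 p * 1 - x2 p * 0) - u1 * (x0 p * 1 - x2 p * 0) +
       u2 * (x0 p * 0 - x1 p * 0))) => //; by field.
  + by field.
  + apply: (@eq_via _ _ (x1 p) (-1) (u0 * (x1 p * 0 - x2 p * 0) - u1 * (x0 p * 0 - x2 p * 1) +
       u2 * (x0 p * 0 - x1 p * 1))) => //; by field.
- exists (x2 u / x2 p); case: u h0 h1 h2 => u0 u1 u2 /= h0 h1 h2; congr Vec.
  + apply: (@eq_via _ _ (x2 p) (-1) (u0 * (x1 p * 0 - x2 p * 1) - u1 * (x0 p * 0 - x2 p * 0) +
       u2 * (x0 p * 1 - x1 p * 0))) => //; by field.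
  + apply: (@eq_via _ _ (x2 p) 1 (u0 * (x1 p * 0 - x2 p * 0) - u1 * (x0 p * 0 - x2 p * 1) +
       u2 * (x0 p * 0 - x1 p * 1))) => //; by field.
  + by field.
Qed.


Definition vadd (u v : vec) := Vec (x0 u + x0 v) (x1 u + x1 v) (x2 u + x2 v).

Lemma Phi_vsc a l p x : Phi a (vsc l p) (vsc l p) x = l ^+ 2 * Phi a p p x.
Proof. rewrite /Phi /=; ring. Qed.

Lemma vertex_par a u p : nzv p -> (forall x y, Phi a p x y = 0) ->
  det3 u p e0 = 0 -> det3 u p e1 = 0 -> det3 u p e2 = 0 -> forall x, Phi a u u x = 0.
Proof.
move=> np hp h0 h1 h2 x; have [l ->] := par h0 h1 h2 np.
by rewrite Phi_vsc hp mulr0.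
Qed.

Lemma Phi_zero a : (forall u x, Phi a u u x = 0) -> forall u v w, Phi a u v w = 0.
Proof.
move=> h u v w.
have e : 2 * Phi a u v w = Phi a (vadd u v) (vadd u v) w - Phi a u u w - Phi a v v w.
  rewrite /Phi /=; ring.
by move: e; rewrite !h !subr0 => /eqP; rewrite mulf_eq0 pnatr_eq0 /= => /eqP.
Qed.

Lemma det3_e : det3 e0 e1 e2 = 1.
Proof. rewrite /det3 /=; ring. Qed.

Lemma good_zero a : (forall u v w, Phi a u v w = 0) -> good a.
Proof.
move=> h; exists e0, e1, e2; split; rewrite ?h ?addr0 //.
by rewrite det3_e oner_neq0.
Qed.

Lemma pick_w (u p : vec) (P : Prop) :
  (det3 u p e0 = 0 -> det3 u p e1 = 0 -> det3 u p e2 = 0 -> P) ->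
  (forall w, det3 u p w != 0 -> P) -> P.
Proof.
move=> hz hw.
have [z0|] := eqVneq (det3 u p e0) 0; last exact: hw.
have [z1|] := eqVneq (det3 u p e1) 0; last exact: hw.
have [z2|] := eqVneq (det3 u p e2) 0; last exact: hw.
exact: hz.
Qed.

Lemma not_sing a u v w : det3 u v w != 0 -> Phi a u u v = 0 -> ~ (forall x, Phi a u u x = 0) ->
  Phi a u u u != 0 \/ Phi a u u w != 0 \/ Phi a u w w = 0.
Proof.
move=> hD hv hn.
have [e1'|] := eqVneq (Phi a u u u) 0; last by left.
have [e2'|] := eqVneq (Phi a u u w) 0; last by right; left.
by exfalso; apply: hn; apply: (span_Phi hD).
Qed.

Lemma caseA a p : nzv p -> (forall x y, Phi a p x y = 0) -> good a.
Proof.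
move=> np hp.
case: (classic (exists u x, Phi a u u x != 0)) => [[u [x hux]]|hno]; last first.
  apply: good_zero; apply: Phi_zero => u x.
  by case: (eqVneq (Phi a u u x) 0) => // h; exfalso; apply: hno; exists u, x.
have hn : ~ (forall x, Phi a u u x = 0) by move=> h; move: hux; rewrite h eqxx.
apply: (pick_w (u := u) (p := p)).
  by move=> z0 z1 z2; exfalso; apply: hn; apply: (vertex_par np hp).
move=> w hw; apply: (caseK (v1 := u) (v2 := p) (w := w)) => //.
- by rewrite Phi_sym12 hp.
- by rewrite Phi_sym12 hp.
- by rewrite Phi_sym12 hp.
- apply: not_sing hw _ hn; by rewrite Phi_sym13 hp.
- by right; right; rewrite hp.
Qed.


Definition bvec (b1 b2 b3 u : vec) : vec :=
  Vec (x0 u * x0 b1 + x1 u * x0 b2 + x2 u * x0 b3)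
      (x0 u * x1 b1 + x1 u * x1 b2 + x2 u * x1 b3)
      (x0 u * x2 b1 + x1 u * x2 b2 + x2 u * x2 b3).

Definition tr (a : cub) (b1 b2 b3 : vec) : cub :=
  Cub (Phi a b1 b1 b1) (Phi a b1 b1 b2) (Phi a b1 b1 b3) (Phi a b1 b2 b2) (Phi a b1 b2 b3)
      (Phi a b1 b3 b3) (Phi a b2 b2 b2) (Phi a b2 b2 b3) (Phi a b2 b3 b3) (Phi a b3 b3 b3).

Lemma Phi_tr a b1 b2 b3 u v w :
  Phi (tr a b1 b2 b3) u v w = Phi a (bvec b1 b2 b3 u) (bvec b1 b2 b3 v) (bvec b1 b2 b3 w).
Proof. rewrite /tr /Phi /bvec /=; ring. Qed.

Lemma det_tr b1 b2 b3 u v w :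
  det3 (bvec b1 b2 b3 u) (bvec b1 b2 b3 v) (bvec b1 b2 b3 w) = det3 b1 b2 b3 * det3 u v w.
Proof. rewrite /det3 /bvec /=; ring. Qed.

Lemma good_tr a b1 b2 b3 : det3 b1 b2 b3 != 0 -> good (tr a b1 b2 b3) -> good a.
Proof.
move=> hb [u [v [w [hD E0 E1 E2 E3]]]].
exists (bvec b1 b2 b3 u), (bvec b1 b2 b3 v), (bvec b1 b2 b3 w).
rewrite -!Phi_tr det_tr; split => //.
by rewrite mulf_neq0.
Qed.


Definition Qf (a : cub) (y z y' z' : K) :=
  c011 a * y * y' + c012 a * (y * z' + z * y') + c022 a * z * z'.

Lemma solve_lin (C d : K) : d != 0 -> exists x, C + x * d = 0.
Proof. by move=> hd; exists (- C / d); field. Qed.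

Section Sing.
Variable a : cub.
Hypothesis h000 : c000 a = 0.
Hypothesis h001 : c001 a = 0.
Hypothesis h002 : c002 a = 0.

Lemma Phi_ee v : Phi a v e0 e0 = 0.
Proof. by rewrite /Phi /= h000 h001 h002; ring. Qed.

Lemma caseS2 : c011 a * c022 a - c012 a ^+ 2 != 0 -> good a.
Proof.
set q11 := c011 a; set q12 := c012 a; set q22 := c022 a => hdet.
have [t ht] : exists t, q11 + 2 * q12 * t + q22 * t ^+ 2 != 0.
  have key : 16 * (q11 * q22 - q12 ^+ 2) =
    8 * (q11 + 2 * q12 * 0 + q22 * 0 ^+ 2) * ((q11 + 2 * q12 * 1 + q22 * 1 ^+ 2)
       + (q11 + 2 * q12 * (-1) + q22 * (-1) ^+ 2))
    - 16 * (q11 + 2 * q12 * 0 + q22 * 0 ^+ 2) ^+ 2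
    - ((q11 + 2 * q12 * 1 + q22 * 1 ^+ 2) - (q11 + 2 * q12 * (-1) + q22 * (-1) ^+ 2)) ^+ 2.
    by ring.
  have [z0|] := eqVneq (q11 + 2 * q12 * 0 + q22 * 0 ^+ 2) 0; last by exists 0.
  have [z1|] := eqVneq (q11 + 2 * q12 * 1 + q22 * 1 ^+ 2) 0; last by exists 1.
  have [zm|] := eqVneq (q11 + 2 * q12 * (-1) + q22 * (-1) ^+ 2) 0; last by exists (-1).
  move: key; rewrite z0 z1 zm (_ : 8 * 0 * (0 + 0) - 16 * 0 ^+ 2 - (0 - 0) ^+ 2 = 0 :> K); last by ring.
  move/eqP; rewrite mulf_eq0 pnatr_eq0 /= => /eqP h; by rewrite h eqxx in hdet.
set n1 := q11 + 2 * q12 * t + q22 * t ^+ 2 in ht.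
set A := - (q12 + q22 * t); set B := q11 + q12 * t.
have hn2 : n1 * (q11 * q22 - q12 ^+ 2) != 0 by rewrite mulf_neq0.
have [x2 hx2] : exists x2, Phi a (Vec 0 1 t) (Vec 0 1 t) (Vec 0 A B) + x2 * n1 = 0.
  exact: solve_lin.
have [x1 hx1] : exists x1, Phi a (Vec 0 1 t) (Vec 0 A B) (Vec 0 A B)
    + x1 * (n1 * (q11 * q22 - q12 ^+ 2)) = 0.
  exact: solve_lin.
apply: (caseK (v1 := Vec x1 1 t) (v2 := Vec x2 A B) (w := e0)).
- transitivity (Phi a (Vec 0 1 t) (Vec 0 1 t) (Vec 0 A B) + x2 * n1); last exact: hx2.
  rewrite /Phi /n1 /A /B /q11 /q12 /q22 /= h000 h001 h002; ring.
- transitivity (Phi a (Vec 0 1 t) (Vec 0 A B) (Vec 0 A B) + x1 * (n1 * (q11 * q22 - q12 ^+ 2)));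
    last exact: hx1.
  rewrite /Phi /n1 /A /B /q11 /q12 /q22 /= h000 h001 h002; ring.
- rewrite /Phi /A /B /q11 /q12 /q22 /= h000 h001 h002; ring.
- rewrite (_ : det3 _ _ _ = n1) // /det3 /n1 /A /B /=; ring.
- by right; right; rewrite Phi_ee.
- by right; right; rewrite Phi_ee.
Qed.


Lemma S1K t : c012 a = 0 -> c022 a = 0 -> c011 a != 0 -> c122 a + t * c222 a = 0 -> good a.
Proof.
move=> h012 h022 hb ht.
have [x2 hx2] := solve_lin (Phi a (Vec 0 1 t) (Vec 0 1 t) (Vec 0 0 1)) hb.
apply: (caseK (v1 := Vec 0 1 t) (v2 := Vec x2 0 1) (w := e0)).
- transitivity (Phi a (Vec 0 1 t) (Vec 0 1 t) (Vec 0 0 1) + x2 * c011 a); last exact: hx2.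
  rewrite /Phi /= h000 h001 h002 h012 h022; ring.
- transitivity (c122 a + t * c222 a); last exact: ht.
  rewrite /Phi /= h000 h001 h002 h012 h022; ring.
- rewrite /Phi /= h000 h001 h002 h012 h022; ring.
- rewrite (_ : det3 _ _ _ = 1) ?oner_neq0 // /det3 /=; ring.
- by right; right; rewrite Phi_ee.
- by right; right; rewrite Phi_ee.
Qed.

End Sing.

Lemma S1expl a : c000 a = 0 -> c001 a = 0 -> c002 a = 0 -> c012 a = 0 -> c022 a = 0 ->
  c111 a = 0 -> c112 a = 0 -> c222 a = 0 -> c011 a != 0 -> c122 a != 0 -> good a.
Proof.
move=> h000 h001 h002 h012 h022 h111 h112 h222 hb hc.
have [y hy] : exists y : K, y ^+ 2 = 2^-1.
  have [y hy] := @solve_monicpoly K 2 (fun i => if i == 0%N then 2^-1 else 0) isT.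
  by exists y; move: hy; rewrite !big_ord_recr big_ord0 /= add0r mul0r addr0 expr0 mulr1.
have [x hx] : exists x, c011 a * x = c122 a * y.
  by exists (c122 a * y / c011 a); field.
have hy0 : y != 0.
  apply/eqP => y0; move: hy; rewrite y0 expr0n /= => /esym/eqP.
  by rewrite invr_eq0 pnatr_eq0.
exists (Vec 0 1 1), (Vec x y (-1)), (Vec 0 (-1) 1); split.
- rewrite (_ : det3 _ _ _ = - 2 * x); last by rewrite /det3 /=; ring.
  rewrite mulf_neq0 // ?oppr_eq0 ?pnatr_eq0 //; apply/eqP => x0'.
  move: hx; rewrite x0' mulr0 => /esym/eqP; rewrite mulf_eq0 (negbTE hc) /=.
  by rewrite (negbTE hy0).
- transitivity (c122 a * y - c011 a * x).
    rewrite /Phi /= h000 h001 h002 h012 h022 h111 h112 h222; ring.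
  by rewrite hx subrr.
- transitivity ((c011 a * x - c122 a * y) + (2 * (c011 a * x) * y - c122 a)).
    rewrite /Phi /= h000 h001 h002 h012 h022 h111 h112 h222; ring.
  rewrite hx subrr add0r (_ : 2 * (c122 a * y) * y - c122 a = c122 a * (2 * y ^+ 2 - 1));
    last by ring.
  by rewrite hy mulfV ?pnatr_eq0 // subrr mulr0.
- rewrite /Phi /= h000 h001 h002 h012 h022 h111 h112 h222; ring.
- transitivity ((c011 a * x - c122 a * y) - (2 * (c011 a * x) * y - c122 a)).
    rewrite /Phi /= h000 h001 h002 h012 h022 h111 h112 h222; ring.
  rewrite hx subrr add0r (_ : 2 * (c122 a * y) * y - c122 a = c122 a * (2 * y ^+ 2 - 1));
    last by ring.
  by rewrite hy mulfV ?pnatr_eq0 // subrr mulr0 oppr0.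
Qed.


Lemma S1b a : c000 a = 0 -> c001 a = 0 -> c002 a = 0 -> c012 a = 0 -> c022 a = 0 ->
  c011 a != 0 -> good a.
Proof.
move=> h000 h001 h002 h012 h022 hb.
have [z222|nz222] := eqVneq (c222 a) 0; last first.
  by apply: (@S1K a h000 h001 h002 (- c122 a / c222 a)) => //; field.
have [z122|nz122] := eqVneq (c122 a) 0.
  by apply: (@S1K a h000 h001 h002 0) => //; rewrite z122 z222; ring.
pose al := c111 a / (3 * c011 a); pose be := c112 a / c011 a.
apply: (good_tr (b1 := e0) (b2 := Vec (- al) 1 0) (b3 := Vec (- be) 0 1)).
  by rewrite (_ : det3 _ _ _ = 1) ?oner_neq0 // /det3 /=; ring.
have hb3 : 3 * c011 a != 0 by rewrite mulf_neq0 ?pnatr_eq0.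
apply: S1expl; rewrite /tr /= /Phi /= ?h000 ?h001 ?h002 ?h012 ?h022 ?z222 /al /be.
- ring.
- ring.
- ring.
- ring.
- ring.
- by field.
- by field.
- ring.
- by rewrite (_ : _ + _ = c011 a) //; ring.
- by rewrite (_ : _ + _ = c122 a) //; ring.
Qed.

Lemma S1a a : c000 a = 0 -> c001 a = 0 -> c002 a = 0 -> c011 a != 0 ->
  c011 a * c022 a = c012 a ^+ 2 -> good a.
Proof.
move=> h000 h001 h002 hb hd.
apply: (good_tr (b1 := e0) (b2 := e1) (b3 := Vec 0 (- c012 a) (c011 a))).
  by rewrite (_ : det3 _ _ _ = c011 a) // /det3 /=; ring.
apply: S1b; rewrite /tr /= /Phi /= ?h000 ?h001 ?h002.
- ring.
- ring.
- ring.
- ring.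
- rewrite (_ : _ + _ = c011 a * (c011 a * c022 a - c012 a ^+ 2)); last by ring.
  by rewrite hd subrr mulr0.
- by rewrite (_ : _ + _ = c011 a) //; ring.
Qed.

Lemma S1 a : c000 a = 0 -> c001 a = 0 -> c002 a = 0 ->
  ~ [/\ c011 a = 0, c012 a = 0 & c022 a = 0] ->
  c011 a * c022 a = c012 a ^+ 2 -> good a.
Proof.
move=> h000 h001 h002 hnz hd.
have [z11|nz11] := eqVneq (c011 a) 0; last exact: S1a.
have z12 : c012 a = 0.
  have : c012 a ^+ 2 = 0 by rewrite -hd z11 mul0r.
  by move/eqP; rewrite expf_eq0 /= => /eqP.
have nz22 : c022 a != 0 by apply/eqP => z22; apply: hnz.
apply: (good_tr (b1 := e0) (b2 := e2) (b3 := e1)).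
  by rewrite (_ : det3 _ _ _ = -1) ?oppr_eq0 ?oner_neq0 // /det3 /=; ring.
apply: S1a; rewrite /tr /= /Phi /= ?h000 ?h001 ?h002 ?z11 ?z12.
- ring.
- ring.
- ring.
- by rewrite (_ : _ + _ = c022 a) //; ring.
- ring.
Qed.

Lemma caseS_norm a : c000 a = 0 -> c001 a = 0 -> c002 a = 0 -> good a.
Proof.
move=> h000 h001 h002.
case: (classic [/\ c011 a = 0, c012 a = 0 & c022 a = 0]) => [[z11 z12 z22]|hnz].
  apply: (caseA (p := e0)); first by left; rewrite /= oner_neq0.
  by move=> x y; rewrite /Phi /= h000 h001 h002 z11 z12 z22; ring.
have [hd|hd] := eqVneq (c011 a * c022 a - c012 a ^+ 2) 0; last exact: caseS2.
by apply: S1 => //; apply/eqP; rewrite -subr_eq0 hd.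
Qed.

Lemma caseS a p : nzv p -> (forall x, Phi a p p x = 0) -> good a.
Proof.
move=> np hp.
have H b2 b3 : det3 p b2 b3 != 0 -> good a.
  move=> hD; apply: (good_tr hD); apply: caseS_norm; rewrite /tr /=; exact: hp.
case: np => [n0|[n1|n2]].
- by apply: (H e1 e2); rewrite (_ : det3 _ _ _ = x0 p) // /det3 /=; ring.
- by apply: (H e0 e2); rewrite (_ : det3 _ _ _ = - x1 p) ?oppr_eq0 // /det3 /=; ring.
- by apply: (H e0 e1); rewrite (_ : det3 _ _ _ = x2 p) // /det3 /=; ring.
Qed.



Lemma nzvP v : ~ nzv v -> [/\ x0 v = 0, x1 v = 0 & x2 v = 0].
Proof.
move=> h; split.
- by have [//|n] := eqVneq (x0 v) 0; exfalso; apply: h; left.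
- by have [//|n] := eqVneq (x1 v) 0; exfalso; apply: h; right; left.
- by have [//|n] := eqVneq (x2 v) 0; exfalso; apply: h; right; right.
Qed.

Lemma perp_of r s t : nzv r -> ~ nzv (cross r s) -> ~ nzv (cross r t) ->
  exists q, [/\ nzv q, dot r q = 0, dot s q = 0 & dot t q = 0].
Proof.
move=> nr /nzvP [s0 s1 s2] /nzvP [t0 t1 t2].
have H e : nzv (cross r e) -> exists q, [/\ nzv q, dot r q = 0, dot s q = 0 & dot t q = 0].
  move=> ne; exists (cross r e); split => //.
  - rewrite /dot /cross /=; ring.
  - transitivity (- (x0 e * x0 (cross r s) + x1 e * x1 (cross r s) + x2 e * x2 (cross r s))).
      rewrite /dot /cross /=; ring.
    by rewrite s0 s1 s2; ring.
  - transitivity (- (x0 e * x0 (cross r t) + x1 e * x1 (cross r t) + x2 e * x2 (cross r t))).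
      rewrite /dot /cross /=; ring.
    by rewrite t0 t1 t2; ring.
case: nr => [n0|[n1|n2]].
- apply: (H e1); right; right; rewrite /= (_ : _ - _ = x0 r) //; ring.
- apply: (H e0); right; right; rewrite /= (_ : _ - _ = - x1 r) ?oppr_eq0 //; ring.
- apply: (H e0); right; left; rewrite /= (_ : _ - _ = x2 r) //; ring.
Qed.

Lemma kernel3 r0 r1 r2 : det3 r0 r1 r2 = 0 ->
  exists q, [/\ nzv q, dot r0 q = 0, dot r1 q = 0 & dot r2 q = 0].
Proof.
move=> hD.
case: (classic (nzv (cross r0 r1))) => [n|z01].
  exists (cross r0 r1); split => //; try by rewrite /dot /cross /=; ring.
  by rewrite -hD /dot /cross /det3 /=; ring.
case: (classic (nzv (cross r0 r2))) => [n|z02].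
  exists (cross r0 r2); split => //; try by rewrite /dot /cross /=; ring.
  by rewrite (_ : 0 = - det3 r0 r1 r2); [rewrite /dot /cross /det3 /=; ring | rewrite hD oppr0].
case: (classic (nzv (cross r1 r2))) => [n|z12].
  exists (cross r1 r2); split => //; try by rewrite /dot /cross /=; ring.
  by rewrite -hD /dot /cross /det3 /=; ring.
case: (classic (nzv r0)) => [n0|/nzvP [a0 a1 a2]].
  exact: perp_of.
have zc v : ~ nzv (cross v r0).
  by rewrite /nzv /cross /= a0 a1 a2 !mulr0 !subrr eqxx /=; case=> [|[]].
case: (classic (nzv r1)) => [n1|/nzvP [b0 b1 b2]].
  have [q [nq d1 d0 d2]] := perp_of n1 (zc r1) z12.
  by exists q; split.
have zc' v : ~ nzv (cross v r1).
  by rewrite /nzv /cross /= b0 b1 b2 !mulr0 !subrr eqxx /=; case=> [|[]].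
case: (classic (nzv r2)) => [n2|/nzvP [c0 c1 c2]].
  have [q [nq d2 d0 d1]] := perp_of n2 (zc r2) (zc' r2).
  by exists q; split.
exists e0; split; first by left; rewrite oner_neq0.
all: by rewrite /dot /= ?a0 ?a1 ?a2 ?b0 ?b1 ?b2 ?c0 ?c1 ?c2; ring.
Qed.

Definition Hrow a p (ej : vec) := Vec (Phi a p ej e0) (Phi a p ej e1) (Phi a p ej e2).
Definition Hess a p := det3 (Hrow a p e0) (Hrow a p e1) (Hrow a p e2).

Lemma hess_root a : exists p, nzv p /\ Hess a p = 0.
Proof.
have [z|nz] := eqVneq (Hess a e0) 0.
  by exists e0; split => //; left; rewrite oner_neq0.
pose h3 := Hess a e0; pose h0 := Hess a e1.
pose P1 := Hess a (Vec 1 1 0); pose Pm := Hess a (Vec (-1) 1 0).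
have E t : 2 * Hess a (Vec t 1 0) = 2 * h3 * t ^+ 3 + (P1 + Pm - 2 * h0) * t ^+ 2
   + (P1 - Pm - 2 * h3) * t + 2 * h0.
  rewrite /h3 /h0 /P1 /Pm /Hess /Hrow /det3 /Phi /=; ring.
have [t ht] := @solve_monicpoly K 3 (fun i => if i == 0%N then - h0 / h3 else
   if i == 1%N then - (P1 - Pm - 2 * h3) / (2 * h3) else - (P1 + Pm - 2 * h0) / (2 * h3)) isT.
exists (Vec t 1 0); split; first by right; left; rewrite /= oner_neq0.
move: (E t); rewrite ht !big_ord_recr big_ord0 /= add0r expr0 expr1 mulr1.
have h3E : h3 != 0 by [].
rewrite (_ : 2 * h3 * _ + _ + _ + _ = 0); last by field.
by move/eqP; rewrite mulf_eq0 pnatr_eq0 /= => /eqP.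
Qed.

Lemma caseN a : (forall p, nzv p -> ~ (forall x, Phi a p p x = 0)) -> good a.
Proof.
move=> hns.
have [p [np hp]] := hess_root a.
have [q [nq d0 d1 d2]] := kernel3 hp.
have hpq x : Phi a p q x = 0.
  transitivity (x0 x * dot (Hrow a p e0) q + x1 x * dot (Hrow a p e1) q
     + x2 x * dot (Hrow a p e2) q).
    rewrite /dot /Hrow /Phi /=; ring.
  by rewrite d0 d1 d2; ring.
apply: (pick_w (u := p) (p := q)).
  move=> z0 z1 z2; have [l pl] := par z0 z1 z2 nq.
  exfalso; apply: (hns q nq) => x.
  have : l * Phi a q q x = 0 by rewrite -(hpq x) pl /Phi /=; ring.
  move/eqP; rewrite mulf_eq0 => /orP [/eqP l0|/eqP //].
  by exfalso; move: np; rewrite pl l0 /nzv /= !mul0r eqxx /=; case=> [|[]].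
move=> w hw; apply: (caseK (v1 := p) (v2 := q) (w := w)).
- exact: hpq.
- exact: hpq.
- exact: hpq.
- exact: hw.
- by apply: (not_sing hw) => //; [rewrite Phi_sym23 hpq | exact: hns].
- have hw' : det3 q p w != 0.
    by rewrite (_ : det3 q p w = - det3 p q w) ?oppr_eq0 // /det3; ring.
  by apply: (not_sing hw') => //; [rewrite Phi_sym13 hpq | exact: hns].
Qed.

Lemma good_all a : good a.
Proof.
case: (classic (exists p, nzv p /\ forall x, Phi a p p x = 0)) => [[p [np hp]]|h].
  exact: (caseS np hp).
by apply: caseN => p np hp; apply: h; exists p.
Qed.

End Trilin.


Section DiffAct.
Variable K : fieldType.
Implicit Types (g h A B F G : {mpoly K[3]}).

Lemma diff_actwE k g F : (msize g <= k)%N ->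
  diff_act g F = \sum_(m : 'X_{1..3 < k}) g@_m *: mderivm m F.
Proof.
move=> le_gk; set I : subFinType _ := 'X_{1..3 < k}.
rewrite /diff_act (big_mksub I) ?msupp_uniq //=; first last.
  by move=> x /msize_mdeg_lt /leq_trans; apply.
rewrite big_rmcond //= => j /memN_msupp_eq0 ->.
by rewrite scale0r.
Qed.

Lemma diff_actD g h F : diff_act (g + h) F = diff_act g F + diff_act h F.
Proof.
pose k := maxn (msize g) (msize h).
rewrite !(diff_actwE (k := k)) ?leq_maxl ?leq_maxr //; last first.
  exact: leq_trans (msizeD_le _ _) _.
rewrite -big_split /=; apply: eq_bigr => m _.
by rewrite mcoeffD scalerDl.
Qed.

Lemma diff_actZ c g F : diff_act (c *: g) F = c *: diff_act g F.
Proof.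
rewrite !(diff_actwE (k := msize g)) //; last exact: msizeZ_le.
rewrite scaler_sumr; apply: eq_bigr => m _.
by rewrite mcoeffZ scalerA.
Qed.

Lemma diff_act0 F : diff_act 0 F = 0.
Proof. by rewrite /diff_act msupp0 big_nil. Qed.

Lemma diff_act_sum (T : Type) (r : seq T) (f : T -> {mpoly K[3]}) F :
  diff_act (\sum_(x <- r) f x) F = \sum_(x <- r) diff_act (f x) F.
Proof.
elim: r => [|x r ih]; first by rewrite !big_nil diff_act0.
by rewrite !big_cons diff_actD ih.
Qed.

Lemma diff_actX m F : diff_act 'X_[m] F = mderivm m F.
Proof. by rewrite /diff_act msuppX big_seq1 mcoeffX eqxx scale1r. Qed.

Lemma diff_actFD g F G : diff_act g (F + G) = diff_act g F + diff_act g G.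
Proof. by rewrite /diff_act -big_split /=; apply: eq_bigr => m _; rewrite mderivmD scalerDr. Qed.

Lemma diff_actFZ g c F : diff_act g (c *: F) = c *: diff_act g F.
Proof.
rewrite /diff_act scaler_sumr; apply: eq_bigr => m _.
by rewrite mderivmZ !scalerA mulrC.
Qed.

Lemma diff_actF0 g : diff_act g 0 = 0.
Proof. by rewrite /diff_act big1 // => m _; rewrite raddf0 scaler0. Qed.

Lemma diff_act_mulX A (j : 'I_3) F : diff_act (A * 'X_j) F = diff_act A (mderiv j F).
Proof.
rewrite {1}[A]mpolyE big_distrl /= diff_act_sum.
transitivity (\sum_(m <- msupp A) A@_m *: mderivm m (mderiv j F)); last by [].
apply: eq_bigr => m _.
rewrite -scalerAl -mpolyXD diff_actZ diff_actX.
by rewrite addmC mderivmDm mderivmU1m.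
Qed.


Definition o0 : 'I_3 := @Ordinal 3 0 isT.
Definition o1 : 'I_3 := @Ordinal 3 1 isT.
Definition o2 : 'I_3 := @Ordinal 3 2 isT.

Definition Lf (w : vec K) : {mpoly K[3]} :=
  (x0 w)%:MP * 'X_o0 + (x1 w)%:MP * 'X_o1 + (x2 w)%:MP * 'X_o2.

Lemma mderivXU (i j : 'I_3) : mderiv i ('X_j : {mpoly K[3]}) = (j == i)%:R.
Proof.
rewrite mderivX mnm1E; case: eqP => [->|_]; last by rewrite scale0r.
rewrite scale1r (_ : (U_(i) - U_(i))%MM = 0%MM) ?mpolyX0 //.
by apply/mnmP => l; rewrite mnmBE subnn mnm0E.
Qed.

Lemma mderiv_Lf w :
  [/\ mderiv o0 (Lf w) = (x0 w)%:MP, mderiv o1 (Lf w) = (x1 w)%:MP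
    & mderiv o2 (Lf w) = (x2 w)%:MP].
Proof.
by split; rewrite /Lf !mderivD !mderiv_mulC !mderivXU /= ?mulr0 ?mulr1 ?addr0 ?add0r.
Qed.

Lemma mderiv_cube (j : 'I_3) (P : {mpoly K[3]}) :
  mderiv j (P ^+ 3) = 3%:R * P ^+ 2 * mderiv j P.
Proof. by rewrite !exprS expr0 mulr1 !mderivM; ring. Qed.

Lemma mulr_scaleX A (c : K) (j : 'I_3) : A * (c%:MP * 'X_j) = c *: (A * 'X_j).
Proof. by rewrite mulrCA mul_mpolyC. Qed.

Lemma key_apolar A (c p : vec K) : dot c p = 0 -> diff_act (A * Lf c) ((Lf p) ^+ 3) = 0.
Proof.
move=> hcp.
rewrite /Lf !mulrDr !diff_actD !mulr_scaleX !diff_actZ !diff_act_mulX.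
rewrite -!diff_actFZ -!diff_actFD.
rewrite !mderiv_cube; have [d0 d1 d2] := mderiv_Lf p; rewrite -/(Lf p) d0 d1 d2.
rewrite (_ : _ + _ = (3%:R * Lf p ^+ 2 * (dot c p)%:MP)); last first.
  rewrite -!mul_mpolyC /dot; ring.
by rewrite hcp mpolyC0 mulr0 diff_actF0.
Qed.

End DiffAct.


Section Gen2.
Variable S : comNzRingType.
Implicit Types (u v w X : vec S) (a : cub S).

Definition vsum3 (W1 W2 W3 : S) (v1 v2 v3 : vec S) : vec S :=
  Vec (W1 * x0 v1 + W2 * x0 v2 + W3 * x0 v3) (W1 * x1 v1 + W2 * x1 v2 + W3 * x1 v3)
      (W1 * x2 v1 + W2 * x2 v2 + W3 * x2 v3).

Lemma Phi_comb a (W1 W2 W3 : S) (v1 v2 v3 : vec S) :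
  Phi a (vsum3 W1 W2 W3 v1 v2 v3) (vsum3 W1 W2 W3 v1 v2 v3) (vsum3 W1 W2 W3 v1 v2 v3) =
  W1 ^+ 3 * Phi a v1 v1 v1 + W2 ^+ 3 * Phi a v2 v2 v2 + W3 ^+ 3 * Phi a v3 v3 v3
  + 3%:R * (W1 ^+ 2 * W2) * Phi a v1 v1 v2 + 3%:R * (W1 ^+ 2 * W3) * Phi a v1 v1 v3
  + 3%:R * (W1 * W2 ^+ 2) * Phi a v1 v2 v2 + 3%:R * (W2 ^+ 2 * W3) * Phi a v2 v2 v3
  + 3%:R * (W1 * W3 ^+ 2) * Phi a v1 v3 v3 + 3%:R * (W2 * W3 ^+ 2) * Phi a v2 v3 v3
  + 6%:R * (W1 * W2 * W3) * Phi a v1 v2 v3.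
Proof. rewrite /Phi /vsum3 /=; ring. Qed.

Lemma regroup (g111 g112 g113 g122 g123 g133 g222 g223 g233 g333 W1 W2 W3 : S) :
  W1 ^+ 3 * g111 + W2 ^+ 3 * g222 + W3 ^+ 3 * g333
  + 3%:R * (W1 ^+ 2 * W2) * g112 + 3%:R * (W1 ^+ 2 * W3) * g113
  + 3%:R * (W1 * W2 ^+ 2) * g122 + 3%:R * (W2 ^+ 2 * W3) * g223
  + 3%:R * (W1 * W3 ^+ 2) * g133 + 3%:R * (W2 * W3 ^+ 2) * g233
  + 6%:R * (W1 * W2 * W3) * g123 =
  (g111 + g112 + g113) * W1 ^+ 3 + (g222 - g112 + g223) * W2 ^+ 3
  + (g333 - g113 - g223) * W3 ^+ 3
  - g112 * (W1 - W2) ^+ 3 - g113 * (W1 - W3) ^+ 3 - g223 * (W2 - W3) ^+ 3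
  + 6%:R * g123 * (W1 * W2 * W3) + 3%:R * (g112 + g122) * (W1 * W2 ^+ 2)
  + 3%:R * (g113 + g133) * (W1 * W3 ^+ 2) + 3%:R * (g223 + g233) * (W2 * W3 ^+ 2).
Proof. ring. Qed.

Lemma cramerY (v1 v2 v3 : vec S) X :
  vsum3 (dot (cross v2 v3) X) (dot (cross v3 v1) X) (dot (cross v1 v2) X) v1 v2 v3 =
  Vec (det3 v1 v2 v3 * x0 X) (det3 v1 v2 v3 * x1 X) (det3 v1 v2 v3 * x2 X).
Proof. rewrite /vsum3 /dot /cross /det3 /=; congr Vec; ring. Qed.

Lemma Phi_scale a (d : S) X :
  let Y := Vec (d * x0 X) (d * x1 X) (d * x2 X) in Phi a Y Y Y = d ^+ 3 * Phi a X X X.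
Proof. rewrite /Phi /=; ring. Qed.

Lemma Phi_pattern a (v1 v2 v3 : vec S) X :
  let W1 := dot (cross v2 v3) X in let W2 := dot (cross v3 v1) X in
  let W3 := dot (cross v1 v2) X in
  det3 v1 v2 v3 ^+ 3 * Phi a X X X =
  (Phi a v1 v1 v1 + Phi a v1 v1 v2 + Phi a v1 v1 v3) * W1 ^+ 3
  + (Phi a v2 v2 v2 - Phi a v1 v1 v2 + Phi a v2 v2 v3) * W2 ^+ 3
  + (Phi a v3 v3 v3 - Phi a v1 v1 v3 - Phi a v2 v2 v3) * W3 ^+ 3
  - Phi a v1 v1 v2 * (W1 - W2) ^+ 3 - Phi a v1 v1 v3 * (W1 - W3) ^+ 3
  - Phi a v2 v2 v3 * (W2 - W3) ^+ 3
  + 6%:R * Phi a v1 v2 v3 * (W1 * W2 * W3)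
  + 3%:R * (Phi a v1 v1 v2 + Phi a v1 v2 v2) * (W1 * W2 ^+ 2)
  + 3%:R * (Phi a v1 v1 v3 + Phi a v1 v3 v3) * (W1 * W3 ^+ 2)
  + 3%:R * (Phi a v2 v2 v3 + Phi a v2 v3 v3) * (W2 * W3 ^+ 2).
Proof.
move=> W1 W2 W3.
by rewrite -Phi_scale -cramerY Phi_comb regroup.
Qed.

End Gen2.


Section Fexp.
Variable K : fieldType.

Definition mnm3_def (i j k : nat) : 'X_{1..3} := (U_(o0) *+ i + U_(o1) *+ j + U_(o2) *+ k)%MM.
Definition mnm3 := locked mnm3_def.

Lemma mnm3E i j k : [/\ mnm3 i j k o0 = i, mnm3 i j k o1 = j & mnm3 i j k o2 = k].
Proof. by rewrite /mnm3 -lock /mnm3_def !mnmDE !mulmnE !mnm1E /=; split; lia. Qed.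

Lemma mnm3_eta (m : 'X_{1..3}) : m = mnm3 (m o0) (m o1) (m o2).
Proof.
have [e0 e1 e2] := mnm3E (m o0) (m o1) (m o2).
apply/mnmP => -[[|[|[|l]]] hl] //.
- by rewrite (_ : Ordinal hl = o0) ?e0 //; apply: val_inj.
- by rewrite (_ : Ordinal hl = o1) ?e1 //; apply: val_inj.
- by rewrite (_ : Ordinal hl = o2) ?e2 //; apply: val_inj.
Qed.

Lemma eq_mnm3 i j k i' j' k' :
  (mnm3 i j k == mnm3 i' j' k') = [&& i == i', j == j' & k == k'].
Proof.
have [a0 a1 a2] := mnm3E i j k; have [b0 b1 b2] := mnm3E i' j' k'.
apply/eqP/and3P => [e|[/eqP ei /eqP ej /eqP ek]].
  have := congr1 (fun m : 'X_{1..3} => (m o0, m o1, m o2)) e.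
  by rewrite /= a0 a1 a2 b0 b1 b2 => -[-> -> ->]; rewrite !eqxx.
by rewrite ei ej ek.
Qed.

Lemma mdeg_mnm3 i j k : mdeg (mnm3 i j k) = (i + j + k)%N.
Proof. by rewrite /mnm3 -lock /mnm3_def !mdegD !mdegMn !mdeg1 !mul1n. Qed.

Lemma X_mnm3 i j k : 'X_[mnm3 i j k] = 'X_o0 ^+ i * 'X_o1 ^+ j * 'X_o2 ^+ k :> {mpoly K[3]}.
Proof. by rewrite /mnm3 -lock /mnm3_def !mpolyXD !mpolyXn. Qed.

Definition L10 : seq 'X_{1..3} :=
  [:: mnm3 3 0 0; mnm3 2 1 0; mnm3 2 0 1; mnm3 1 2 0; mnm3 1 1 1; mnm3 1 0 2;
      mnm3 0 3 0; mnm3 0 2 1; mnm3 0 1 2; mnm3 0 0 3].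

Lemma L10_uniq : uniq L10.
Proof. by rewrite /L10 /= !inE !eq_mnm3. Qed.

Lemma in_L10 m : mdeg m = 3%N -> m \in L10.
Proof.
rewrite [m]mnm3_eta mdeg_mnm3; move: (m o0) (m o1) (m o2) => i j k hs.
have hi : (i <= 3)%N by lia.
have hj : (j <= 3)%N by lia.
have hk : (k <= 3)%N by lia.
move: hs hi hj hk.
case: i => [|[|[|[|i]]]]; case: j => [|[|[|[|j]]]]; case: k => [|[|[|[|k]]]] => hs hi hj hk;
  try lia.
all: by rewrite /L10 !inE !eq_mnm3.
Qed.

Lemma Fexp (F : {mpoly K[3]}) : F \is 3.-homog ->
  F = \sum_(m <- L10) F@_m *: 'X_[m].
Proof.
move=> hF; rewrite {1}[F]mpolyE.
rewrite [RHS](bigID (fun m => m \in msupp F)) /=.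
rewrite [X in _ = _ + X]big1 ?addr0; last first.
  by move=> m /memN_msupp_eq0 ->; rewrite scale0r.
rewrite -[RHS]big_filter; apply: perm_big.
apply: uniq_perm; first exact: msupp_uniq.
  by rewrite filter_uniq // L10_uniq.
move=> m; rewrite mem_filter; case: (boolP (m \in msupp F)) => //= hm.
by apply/esym/in_L10; apply: (dhomog_mf hF).
Qed.

End Fexp.


Section Lift.
Variable K : numClosedFieldType.
Local Notation MP := {mpoly K[3]}.

Definition liftv (u : vec K) : vec MP := Vec (x0 u)%:MP (x1 u)%:MP (x2 u)%:MP.
Definition liftc (a : cub K) : cub MP :=
  Cub (c000 a)%:MP (c001 a)%:MP (c002 a)%:MP (c011 a)%:MP (c012 a)%:MP
      (c022 a)%:MP (c111 a)%:MP (c112 a)%:MP (c122 a)%:MP (c222 a)%:MP.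
Definition Xv : vec MP := Vec 'X_o0 'X_o1 'X_o2.

Definition cubF (F : MP) : cub K :=
  Cub (F@_(mnm3 3 0 0)) (F@_(mnm3 2 1 0) / 3%:R) (F@_(mnm3 2 0 1) / 3%:R)
      (F@_(mnm3 1 2 0) / 3%:R) (F@_(mnm3 1 1 1) / 6%:R) (F@_(mnm3 1 0 2) / 3%:R)
      (F@_(mnm3 0 3 0)) (F@_(mnm3 0 2 1) / 3%:R) (F@_(mnm3 0 1 2) / 3%:R) (F@_(mnm3 0 0 3)).

Lemma Phi_lift a u v w :
  Phi (liftc a) (liftv u) (liftv v) (liftv w) = (Phi a u v w)%:MP.
Proof. rewrite /Phi /=; ring. Qed.

Lemma det3_lift u v w : det3 (liftv u) (liftv v) (liftv w) = (det3 u v w)%:MP.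
Proof. rewrite /det3 /=; ring. Qed.

Lemma dot_lift_X w : dot (liftv w) Xv = Lf w.
Proof. by []. Qed.

Lemma cross_lift u v : cross (liftv u) (liftv v) = liftv (cross u v).
Proof. rewrite /cross /liftv /=; congr Vec; ring. Qed.

Lemma F_Phi (F : MP) : F \is 3.-homog -> F = Phi (liftc (cubF F)) Xv Xv Xv.
Proof.
move=> hF; rewrite {1}(Fexp hF) /L10 !big_cons big_nil !X_mnm3 -!mul_mpolyC.
have h3 : (3%:R : K) != 0 by rewrite pnatr_eq0.
have h6 : (6%:R : K) != 0 by rewrite pnatr_eq0.
have -> : F@_(mnm3 2 1 0) = 3%:R * c001 (cubF F) by rewrite /cubF /=; field.
have -> : F@_(mnm3 2 0 1) = 3%:R * c002 (cubF F) by rewrite /cubF /=; field.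
have -> : F@_(mnm3 1 2 0) = 3%:R * c011 (cubF F) by rewrite /cubF /=; field.
have -> : F@_(mnm3 1 1 1) = 6%:R * c012 (cubF F) by rewrite /cubF /=; field.
have -> : F@_(mnm3 1 0 2) = 3%:R * c022 (cubF F) by rewrite /cubF /=; field.
have -> : F@_(mnm3 0 2 1) = 3%:R * c112 (cubF F) by rewrite /cubF /=; field.
have -> : F@_(mnm3 0 1 2) = 3%:R * c122 (cubF F) by rewrite /cubF /=; field.
have -> : F@_(mnm3 3 0 0) = c000 (cubF F) by [].
have -> : F@_(mnm3 0 3 0) = c111 (cubF F) by [].
have -> : F@_(mnm3 0 0 3) = c222 (cubF F) by [].
move: (cubF F) => a.
rewrite /Phi /=; ring.
Qed.

End Lift.


Section Final.
Variable K : numClosedFieldType.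
Local Notation MP := {mpoly K[3]}.

Lemma Lf_homog (w : vec K) : Lf w \is 1.-homog.
Proof.
rewrite /Lf !mul_mpolyC.
by rewrite !rpredD // dhomogZ // dhomogX; apply/eqP; exact: mdeg1.
Qed.

Lemma Lf_coef (w : vec K) :
  [/\ (Lf w)@_U_(o0) = x0 w, (Lf w)@_U_(o1) = x1 w & (Lf w)@_U_(o2) = x2 w].
Proof.
have n01 : (o0 == o1) = false by [].
have n02 : (o0 == o2) = false by [].
have n12 : (o1 == o2) = false by [].
have n10 : (o1 == o0) = false by [].
have n20 : (o2 == o0) = false by [].
have n21 : (o2 == o1) = false by [].
rewrite /Lf !mcoeffD !mcoeffCM !mcoeffXU !eqxx n01 n02 n12 n10 n20 n21.
by split; rewrite /= !mulr0 !mulr1 ?addr0 ?add0r.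
Qed.

Lemma cramerT (p q r : vec K) (a b c : K) : det3 p q r != 0 ->
  a * x0 p + b * x0 q + c * x0 r = 0 -> a * x1 p + b * x1 q + c * x1 r = 0 ->
  a * x2 p + b * x2 q + c * x2 r = 0 -> [/\ a = 0, b = 0 & c = 0].
Proof.
move=> hD h0 h1 h2.
apply: (@cramer K a b c (Vec (x0 p) (x0 q) (x0 r)) (Vec (x1 p) (x1 q) (x1 r))
   (Vec (x2 p) (x2 q) (x2 r))) => //=.
by rewrite (_ : det3 _ _ _ = det3 p q r) // /det3 /=; ring.
Qed.


Lemma Lf_sub (u v : vec K) :
  Lf u - Lf v = Lf (Vec (x0 u - x0 v) (x1 u - x1 v) (x2 u - x2 v)).
Proof. rewrite /Lf /=; ring. Qed.

Lemma diff_actFB (g P Q : MP) : diff_act g (P - Q) = diff_act g P - diff_act g Q.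
Proof.
by rewrite -scaleN1r diff_actFD diff_actFZ scaleN1r.
Qed.

Lemma diff_actFN (g P : MP) : diff_act g (- P) = - diff_act g P.
Proof. by rewrite -scaleN1r diff_actFZ scaleN1r. Qed.

Lemma diff_act_mulC (g : MP) (c : K) (P : MP) : diff_act g (c%:MP * P) = c *: diff_act g P.
Proof. by rewrite mul_mpolyC diff_actFZ. Qed.

Lemma main_K (F : MP) : F \is 3.-homog ->
  exists l : 'I_4 -> MP,
    [/\ forall k, l k \is 1.-homog, any3_lin_indep l & star_apolar l F].
Proof.
move=> hF.
have [v1 [v2 [v3 [hD E0 E1 E2 E3]]]] := good_all (cubF F).
pose v4 := Vec (x0 v1 + x0 v2 + x0 v3) (x1 v1 + x1 v2 + x1 v3) (x2 v1 + x2 v2 + x2 v3).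
pose wv (k : 'I_4) := nth v1 [:: v1; v2; v3; v4] k.
have hdet (i j k : 'I_4) : i != j -> i != k -> j != k -> det3 (wv i) (wv j) (wv k) != 0.
  case: i => [[|[|[|[|?]]]] ?] //; case: j => [[|[|[|[|?]]]] ?] //;
    case: k => [[|[|[|[|?]]]] ?] //= _ _ _.
  all: try first [ rewrite (_ : det3 _ _ _ = det3 v1 v2 v3); [done | rewrite /det3 /wv /v4 /=; ring]
             | rewrite (_ : det3 _ _ _ = - det3 v1 v2 v3); [by rewrite oppr_eq0
                 | rewrite /det3 /wv /v4 /=; ring] ].
exists (fun k => Lf (wv k)); split.
- by move=> k; exact: Lf_homog.
- move=> i j k hij hik hjk a b c h.
  have hdet' := hdet i j k hij hik hjk.
  have [ai0 ai1 ai2] := Lf_coef (wv i).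
  have [aj0 aj1 aj2] := Lf_coef (wv j).
  have [ak0 ak1 ak2] := Lf_coef (wv k).
  have e0 := congr1 (mcoeff U_(o0)) h.
  have e1 := congr1 (mcoeff U_(o1)) h.
  have e2 := congr1 (mcoeff U_(o2)) h.
  rewrite !mcoeffD !mcoeffZ mcoeff0 ai0 aj0 ak0 in e0.
  rewrite !mcoeffD !mcoeffZ mcoeff0 ai1 aj1 ak1 in e1.
  rewrite !mcoeffD !mcoeffZ mcoeff0 ai2 aj2 ak2 in e2.
  exact: cramerT hdet' e0 e1 e2.
- move=> g hg; rewrite inE; apply/eqP.
  have Zp (i j : 'I_4) p : (i < j)%N -> dot (wv i) p = 0 -> dot (wv j) p = 0 ->
      diff_act g (Lf p ^+ 3) = 0.
    move=> hij hi hj; have [A [B ->]] := hg i j hij.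
    by rewrite diff_actD !key_apolar ?addr0.
  have key := Phi_pattern (liftc (cubF F)) (liftv v1) (liftv v2) (liftv v3) (Xv K).
  cbv zeta in key.
  rewrite -(F_Phi hF) !cross_lift !dot_lift_X !Phi_lift det3_lift in key.
  rewrite !Lf_sub in key.
  rewrite -!mpolyCN -!mpolyCD E0 E1 E2 E3 mpolyC0 !mulr0 !mul0r !addr0 in key.
  have := congr1 (diff_act g) key.
  rewrite -rmorphXn diff_act_mulC !diff_actFD !diff_actFN !diff_act_mulC.
  rewrite (Zp (@Ordinal 4 1 isT) (@Ordinal 4 2 isT)) //; last 2 first.
    by rewrite /wv /dot /cross /=; ring.
    by rewrite /wv /dot /cross /=; ring.
  rewrite (Zp (@Ordinal 4 0 isT) (@Ordinal 4 2 isT)) //; last 2 first.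
    by rewrite /wv /dot /cross /=; ring.
    by rewrite /wv /dot /cross /=; ring.
  rewrite (Zp (@Ordinal 4 0 isT) (@Ordinal 4 1 isT)) //; last 2 first.
    by rewrite /wv /dot /cross /=; ring.
    by rewrite /wv /dot /cross /=; ring.
  rewrite (Zp (@Ordinal 4 2 isT) (@Ordinal 4 3 isT)) //; last 2 first.
    by rewrite /wv /dot /cross /=; ring.
    by rewrite /wv /v4 /dot /cross /=; ring.
  rewrite (Zp (@Ordinal 4 1 isT) (@Ordinal 4 3 isT)) //; last 2 first.
    by rewrite /wv /dot /cross /=; ring.
    by rewrite /wv /v4 /dot /cross /=; ring.
  rewrite (Zp (@Ordinal 4 0 isT) (@Ordinal 4 3 isT)) //; last 2 first.
    by rewrite /wv /dot /cross /=; ring.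
    by rewrite /wv /v4 /dot /cross /=; ring.
  rewrite !scaler0 !oppr0 !addr0 => /eqP.
  by rewrite scaler_eq0 expf_eq0 /= (negbTE hD) => /eqP.
Qed.

End Final.

Unset Implicit Arguments.

Theorem theorem4p5 (R : realType) (F : {mpoly R[i][3]}) :
  F \is 3.-homog ->
  exists l : 'I_4 -> {mpoly R[i][3]},
    [/\ forall k, l k \is 1.-homog,
        any3_lin_indep l
      & star_apolar l F].
Proof. exact: main_K. Qed.
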